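(* Let $m,n\ge0$ be integers and $\Gamma={\rm SR}(m,n)$. (i) Any two adjacent vertices $u,v$ uniquely determine three cliques $C_1,C_2,C_3$, where $C_i$ is the unique largest clique of type $i$ containing $u$ and $v$, such that $C_i\cap C_j=\{u,v\}$ for distinct $i,j\in\{1,2,3\}$, and $C_1\cup C_2\cup C_3$ contains all common neighbours of $u$ and $v$. (ii) Fix a vertex $u$ and let $U$ be its set of neighbours. For each $i\in\{1,2,3\}$, the maximal cliques of type $i$ containing $u$, with $u$ removed, form a partition of $U$. Each edge of the subgraph induced on $U$ is contained in a unique such clique (among all three types), and hence has a unique type. (iii) $\Gamma$ does not contain an induced subgraph isomorphic to the complete tripartite graph $K_{1,1,4}$.
   Context: $\mathbb{N}=\{0,1,2,\dots\}$; $e_i$ is the $i$-th standard unit vector. ${\rm SR}(m,n)$ has as vertices the vectors in $\mathbb{N}^m$ with coordinate sum $n$, two being adjacent when they differ in precisely two coordinates. Every clique is of (at least) one of three types: type 1: all pairs of distinct vertices in the clique differ exactly in coordinates $j,k$ for one fixed pair $j\ne k$; type 2: the clique is $\{x+ae_i: i\in I\}$ with $1\le a\le n$, $x\in\mathbb{N}^m$ of coordinate sum $n-a$, $I\subseteq\{1,\dots,m\}$; type 3: the clique is $\{x-ae_i:i\in I\}$ with $a\ge1$, $x\in\mathbb{N}^m$ of coordinate sum $n+a$, $I\subseteq\{1,\dots,m\}$, $x_i\ge a$ for $i\in I$. *)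

(* Defs.v *)
From mathcomp Require Import all_boot.
Set Implicit Arguments. Unset Strict Implicit. Unset Printing Implicit Defensive.

(* Every
   coordinate is <= n, so we store coordinates in 'I_n.+1; this represents
   exactly the vectors of N^m with coordinate sum n, and gives a finType. *)
Definition SRV (m n : nat) :=
  {x : {ffun 'I_m -> 'I_n.+1} | \sum_(i < m) (x i : nat) == n}.

Section SR.
Variables m n : nat.
Local Notation V := (SRV m n).

Definition cd (v : V) (i : 'I_m) : nat := val (val v i).

Definition adj (u v : V) : bool := #|[set i | cd u i != cd v i]| == 2.

Definition clique (C : {set V}) : Prop :=
  forall u v, u \in C -> v \in C -> u != v -> adj u v.

Definition type1 (C : {set V}) : Prop :=
  exists j k : 'I_m, j != k /\
    forall u v, u \in C -> v \in C -> u != v ->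
      forall l, (cd u l != cd v l) = ((l == j) || (l == k)).

Definition type2 (C : {set V}) : Prop :=
  exists (a : nat) (x : 'I_m -> nat) (I : {set 'I_m}),
    1 <= a <= n /\ \sum_(l < m) x l = n - a /\
    forall v, v \in C <->
      exists2 i, i \in I & forall l, cd v l = x l + (if l == i then a else 0).

Definition type3 (C : {set V}) : Prop :=
  exists (a : nat) (x : 'I_m -> nat) (I : {set 'I_m}),
    1 <= a /\ \sum_(l < m) x l = n + a /\ (forall i, i \in I -> a <= x i) /\
    forall v, v \in C <->
      exists2 i, i \in I & forall l, cd v l = x l - (if l == i then a else 0).

Definition clique_of_type (i : nat) (C : {set V}) : Prop :=
  clique C /\
  match i with
  | 1 => type1 C
  | 2 => type2 C
  | 3 => type3 C
  | _ => False
  end.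

Definition largest_type (i : nat) (u v : V) (C : {set V}) : Prop :=
  clique_of_type i C /\ u \in C /\ v \in C /\
  forall D, clique_of_type i D -> u \in D -> v \in D -> D \subset C.

Definition maximal_type (i : nat) (u : V) (C : {set V}) : Prop :=
  clique_of_type i C /\ u \in C /\
  forall D, clique_of_type i D -> C \subset D -> D = C.

End SR.

(* Main.v *)
Require Import Defs.
From mathcomp Require Import all_boot zify.
Set Implicit Arguments. Unset Strict Implicit. Unset Printing Implicit Defensive.

Section Aux.
Variables m n : nat.
Local Notation V := (SRV m n).
Implicit Types u v w : V.

Lemma cd_inj u v : (forall l, cd u l = cd v l) -> u = v.
Proof. move=> h; apply: val_inj; apply/ffunP => l; apply: val_inj; exact: h. Qed.

Lemma sum_cd v : \sum_(i < m) cd v i = n.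
Proof. exact: (eqP (valP v)). Qed.

Lemma cd_le v i : cd v i <= n.
Proof. rewrite -ltnS; exact: ltn_ord. Qed.

Lemma adjC u v : adj u v = adj v u.
Proof.
rewrite /adj (_ : [set i | cd u i != cd v i] = [set i | cd v i != cd u i]) //.
by apply/setP => i; rewrite !inE eq_sym.
Qed.

Lemma adj_irr u : adj u u = false.
Proof.
rewrite /adj (_ : [set i | _] = set0) ?cards0 //; apply/setP => i; by rewrite !inE eqxx.
Qed.

Lemma adj_neq u v : adj u v -> u != v.
Proof. by apply: contraTneq => ->; rewrite adj_irr. Qed.

Lemma adj_three u v p q r : adj u v -> cd u p != cd v p -> cd u q != cd v q ->
  cd u r != cd v r -> p != q -> p != r -> q != r -> False.
Proof.
move=> /cards2P [s [t [_ E]]] hp hq hr.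
have: p \in [set i | cd u i != cd v i] by rewrite inE.
have: q \in [set i | cd u i != cd v i] by rewrite inE.
have: r \in [set i | cd u i != cd v i] by rewrite inE.
by rewrite E !inE => /orP[]/eqP-> /orP[]/eqP-> /orP[]/eqP->; rewrite ?eqxx.
Qed.

Lemma adj_rest u v p q : adj u v -> p != q -> cd u p != cd v p -> cd u q != cd v q ->
  forall l, l != p -> l != q -> cd u l = cd v l.
Proof.
move=> huv pq hp hq l lp lq; apply/eqP; apply/negPn/negP => h.
by apply: (adj_three huv hp hq h pq); rewrite eq_sym.
Qed.

Lemma adj_of u v p q : p != q -> cd u p != cd v p -> cd u q != cd v q ->
  (forall l, l != p -> l != q -> cd u l = cd v l) -> adj u v.
Proof.
move=> pq hp hq h; rewrite /adj (_ : [set i | _] = [set p; q]) ?cards2 ?pq //.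
apply/setP => l; rewrite !inE; case: (eqVneq l p) => [->|lp] //.
case: (eqVneq l q) => [->|lq] //=.
by rewrite h // eqxx.
Qed.

Lemma pair_sum u v p q : p != q -> (forall l, l != p -> l != q -> cd u l = cd v l) ->
  cd u p + cd u q = cd v p + cd v q.
Proof.
move=> pq h.
have E w : \sum_(i<m) cd w i =
    cd w p + cd w q + \sum_(i < m | (i != p) && (i != q)) cd w i.
  rewrite (bigD1 p) // (bigD1 q) /= ?addnA //; by rewrite eq_sym.
have Hs : \sum_(i < m | (i != p) && (i != q)) cd u i =
          \sum_(i < m | (i != p) && (i != q)) cd v i.
  by apply: eq_bigr => i /andP[]; exact: h.
have := sum_cd u; have := sum_cd v; rewrite !E Hs; lia.
Qed.

Lemma adj_orient u v : adj u v -> exists p q a, [/\ p != q, 0 < a,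
  cd v p = cd u p + a, cd u q = cd v q + a &
  forall l, l != p -> l != q -> cd u l = cd v l].
Proof.
move=> /[dup] huv /cards2P [s [t [st E]]].
have : s \in [set i | cd u i != cd v i] by rewrite E !inE eqxx.
rewrite inE => hs.
have hr l : l != s -> l != t -> cd u l = cd v l.
  move=> ls lt; have : l \notin [set i | cd u i != cd v i] by rewrite E !inE negb_or ls lt.
  by rewrite inE negbK => /eqP.
have ps := pair_sum st hr.
case: (ltngtP (cd u s) (cd v s)) => h.
- exists s, t, (cd v s - cd u s); split => //; lia.
- exists t, s, (cd u s - cd v s); split => //; first by rewrite eq_sym.
  + lia.
  + lia.
  + lia.
  + by move=> l lt ls; apply: hr.
- by rewrite h eqxx in hs.
Qed.

Lemma type1_diff u v p q : p != q -> (forall l, l != p -> l != q -> cd u l = cd v l) ->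
  u != v -> cd u p != cd v p /\ cd u q != cd v q.
Proof.
move=> pq h neq; have ps := pair_sum pq h.
have H : cd u p = cd v p -> False.
  move=> e; move/eqP: neq; apply; apply: cd_inj => l.
  case: (eqVneq l p) => [->//|lp]; case: (eqVneq l q) => [->|lq]; first lia.
  exact: h.
by split; apply/eqP => e; apply: H; lia.
Qed.
End Aux.
Section Main.
Variables (m n : nat) (u v : SRV m n) (p q : 'I_m) (a : nat).
Hypotheses (pq : p != q) (a0 : 0 < a) (Hp : cd v p = cd u p + a)
  (Hq : cd u q = cd v q + a)
  (Hr : forall l, l != p -> l != q -> cd u l = cd v l).

Let qp : q != p. Proof. by rewrite eq_sym. Qed.

Definition yy l := minn (cd u l) (cd v l).
Definition zz l := maxn (cd u l) (cd v l).

Definition C1 := [set w : SRV m n | [forall l, (l != p) && (l != q) ==> (cd w l == cd u l)]].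
Definition C2 := [set w : SRV m n | [exists i, [forall l, cd w l == yy l + (if l == i then a else 0)]]].
Definition C3 := [set w : SRV m n | [exists i, (a <= zz i) &&
   [forall l, cd w l == zz l - (if l == i then a else 0)]]].

Lemma C1P w : reflect (forall l, l != p -> l != q -> cd w l = cd u l) (w \in C1).
Proof.
rewrite inE; apply: (iffP forallP) => h l.
  by move=> lp lq; have /implyP := h l; rewrite lp lq => /(_ isT)/eqP.
by apply/implyP => /andP[lp lq]; rewrite h.
Qed.

Lemma C2P w : reflect (exists i, forall l, cd w l = yy l + (if l == i then a else 0)) (w \in C2).
Proof.
rewrite inE; apply: (iffP existsP) => [[i /forallP h]|[i h]]; exists i.
  by move=> l; apply/eqP.
by apply/forallP => l; rewrite h.
Qed.

Lemma C3P w : reflect (exists2 i, a <= zz i & forall l, cd w l = zz l - (if l == i then a else 0)) (w \in C3).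
Proof.
rewrite inE; apply: (iffP existsP) => [[i /andP[ai /forallP h]]|[i ai h]]; exists i => //.
  by move=> l; apply/eqP.
by rewrite ai; apply/forallP => l; rewrite h.
Qed.

Lemma yr l : l != p -> l != q -> yy l = cd u l.
Proof. move=> lp lq; have := Hr lp lq; rewrite /yy; lia. Qed.
Lemma zr l : l != p -> l != q -> zz l = cd u l.
Proof. move=> lp lq; have := Hr lp lq; rewrite /zz; lia. Qed.

Ltac cases l := case: (eqVneq l p) => [->|lp]; [|case: (eqVneq l q) => [->|lq]];
  rewrite ?eqxx ?(negbTE pq) ?(negbTE qp) /yy /zz;
  [| |have := Hr ltac:(eassumption) ltac:(eassumption)]; try lia.

Lemma Hu2 l : cd u l = yy l + (if l == q then a else 0).
Proof. cases l. Qed.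
Lemma Hv2 l : cd v l = yy l + (if l == p then a else 0).
Proof. cases l. Qed.
Lemma Hu3 l : cd u l = zz l - (if l == p then a else 0).
Proof. cases l. Qed.
Lemma Hv3 l : cd v l = zz l - (if l == q then a else 0).
Proof. cases l. Qed.
Lemma zp : a <= zz p. Proof. rewrite /zz; lia. Qed.
Lemma zq : a <= zz q. Proof. rewrite /zz; lia. Qed.

Lemma huv : adj u v.
Proof.
apply: (adj_of pq); [apply/eqP; lia|apply/eqP; lia|exact: Hr].
Qed.

Lemma u1 : u \in C1. Proof. by apply/C1P. Qed.
Lemma v1 : v \in C1. Proof. by apply/C1P => l lp lq; rewrite (Hr lp lq). Qed.
Lemma u2 : u \in C2. Proof. by apply/C2P; exists q; exact: Hu2. Qed.
Lemma v2 : v \in C2. Proof. by apply/C2P; exists p; exact: Hv2. Qed.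
Lemma u3 : u \in C3. Proof. by apply/C3P; exists p; [exact: zp|exact: Hu3]. Qed.
Lemma v3 : v \in C3. Proof. by apply/C3P; exists q; [exact: zq|exact: Hv3]. Qed.

Lemma shift2_adj (x : 'I_m -> nat) (w w' : SRV m n) i i' :
  (forall l, cd w l = x l + (if l == i then a else 0)) ->
  (forall l, cd w' l = x l + (if l == i' then a else 0)) -> w != w' -> adj w w'.
Proof.
move=> hw hw' neq; case: (eqVneq i i') => [e|ii].
  by subst; move/eqP: neq; case; apply: cd_inj => l; rewrite hw hw'.
have ii' : i' != i by rewrite eq_sym.
apply: (adj_of ii).
- by rewrite hw hw' eqxx (negbTE ii); apply/eqP; lia.
- by rewrite hw hw' eqxx (negbTE ii'); apply/eqP; lia.
- by move=> l li li'; rewrite hw hw' (negbTE li) (negbTE li').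
Qed.

Lemma shift3_adj (x : 'I_m -> nat) (w w' : SRV m n) i i' : a <= x i -> a <= x i' ->
  (forall l, cd w l = x l - (if l == i then a else 0)) ->
  (forall l, cd w' l = x l - (if l == i' then a else 0)) -> w != w' -> adj w w'.
Proof.
move=> ai ai' hw hw' neq; case: (eqVneq i i') => [e|ii].
  by subst; move/eqP: neq; case; apply: cd_inj => l; rewrite hw hw'.
have ii' : i' != i by rewrite eq_sym.
apply: (adj_of ii).
- by rewrite hw hw' eqxx (negbTE ii); apply/eqP; lia.
- by rewrite hw hw' eqxx (negbTE ii'); apply/eqP; lia.
- by move=> l li li'; rewrite hw hw' (negbTE li) (negbTE li').
Qed.

Lemma sumind (i : 'I_m) : \sum_(l < m) (if l == i then a else 0) = a.
Proof. by rewrite (bigD1 i) //= eqxx big1 ?addn0 // => j /negbTE ->. Qed.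

Lemma L1 : largest_type 1 u v C1.
Proof.
have T : forall w w', w \in C1 -> w' \in C1 -> w != w' ->
   [/\ cd w p != cd w' p, cd w q != cd w' q &
       forall l, l != p -> l != q -> cd w l = cd w' l].
  move=> w w' /C1P h1 /C1P h2 neq.
  have h l : l != p -> l != q -> cd w l = cd w' l by move=> lp lq; rewrite h1 ?h2.
  by have [] := type1_diff pq h neq.
split; [split|split; [exact: u1|split; [exact: v1|]]].
  by move=> w w' hw hw' neq; have [] := T w w' hw hw' neq; apply: adj_of.
  exists p, q; split => // w w' hw hw' neq l; have [dp dq h] := T w w' hw hw' neq.
  case: (eqVneq l p) => [->|lp]; first by rewrite dp.
  case: (eqVneq l q) => [->|lq]; first by rewrite dq.
  by rewrite h // eqxx.
move=> D [_ [j' [k' [_ hD]]]] hu hv; apply/subsetP => w hw; apply/C1P => l lp lq.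
case: (eqVneq w u) => [->//|wu].
have h1 := hD w u hw hu wu l.
have h2 := hD u v hu hv (adj_neq huv) l.
rewrite (Hr lp lq) eqxx -h1 in h2.
by apply/eqP/negbFE; rewrite -h2.
Qed.

Lemma L2 : largest_type 2 u v C2.
Proof.
split; [split|split; [exact: u2|split; [exact: v2|]]].
- move=> w w' /C2P[i hi] /C2P[i' hi'] neq; exact: shift2_adj hi hi' neq.
- exists a, yy, setT; split; [|split].
  + by rewrite a0 /=; have := cd_le u q; lia.
  + have := sum_cd u; rewrite (eq_bigr _ (fun l _ => Hu2 l)) big_split /= sumind; lia.
  + move=> w; split => [/C2P[i h]|[i _ h]]; [by exists i|by apply/C2P; exists i].
move=> D [_ [a' [x' [I' [ha' [hs hD]]]]]] hu hv.
have [i1 _ h1] := (hD u).1 hu; have [i2 _ h2] := (hD v).1 hv.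
have e1 : i1 = q.
  apply/eqP; apply: contraT => ne; have ne' : q != i1 by rewrite eq_sym.
  have := h1 q; have := h2 q; rewrite (negbTE ne'); case: (q == i2) => /=; lia.
subst i1.
have e2 : i2 = p.
  apply/eqP; apply: contraT => ne; have ne' : p != i2 by rewrite eq_sym.
  have := h1 p; have := h2 p; rewrite (negbTE ne') (negbTE pq); lia.
subst i2.
have ea : a' = a by have := h1 q; have := h2 q; rewrite eqxx (negbTE qp); lia.
subst a'.
have hx l : x' l = yy l.
  have := h1 l; have := h2 l; rewrite /yy.
  case: (eqVneq l p) => [->|lp]; first by rewrite (negbTE pq); lia.
  case: (eqVneq l q) => [->|lq]; lia.
apply/subsetP => w hw; have [i3 _ h3] := (hD w).1 hw.
by apply/C2P; exists i3 => l; rewrite h3 hx.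
Qed.

Lemma Hz l : zz l = cd v l + (if l == q then a else 0).
Proof. cases l. Qed.

Lemma L3 : largest_type 3 u v C3.
Proof.
split; [split|split; [exact: u3|split; [exact: v3|]]].
- move=> w w' /C3P[i ai hi] /C3P[i' ai' hi'] neq; exact: shift3_adj ai ai' hi hi' neq.
- exists a, zz, [set i | a <= zz i]; split; first exact: a0.
  split; first by have := sum_cd v; rewrite (eq_bigr _ (fun l _ => Hz l)) big_split /= sumind; lia.
  split; first by move=> i; rewrite inE.
  move=> w; split => [/C3P[i ai h]|[i]]; first by exists i => //; rewrite inE.
  by rewrite inE => ai h; apply/C3P; exists i.
move=> D [_ [a' [x' [I' [ha' [hs [hI hD]]]]]]] hu hv.
have [i1 hi1 h1] := (hD u).1 hu; have [i2 hi2 h2] := (hD v).1 hv.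
have := hI _ hi1; have := hI _ hi2 => hx2 hx1.
have e1 : i1 = p.
  apply/eqP; apply: contraT => ne; have ne' : p != i1 by rewrite eq_sym.
  have := h1 p; have := h2 p; rewrite (negbTE ne'); case: (p == i2) => /=; lia.
subst i1.
have e2 : i2 = q.
  apply/eqP; apply: contraT => ne; have ne' : q != i2 by rewrite eq_sym.
  have := h1 q; have := h2 q; rewrite (negbTE ne') (negbTE qp); lia.
subst i2.
have ea : a' = a by have := h1 p; have := h2 p; rewrite eqxx (negbTE pq); lia.
subst a'.
have hx l : x' l = zz l.
  have := h1 l; have := h2 l; rewrite /zz.
  case: (eqVneq l p) => [->|lp]; first by rewrite (negbTE pq); lia.
  case: (eqVneq l q) => [->|lq]; lia.
apply/subsetP => w hw; have [i3 hi3 h3] := (hD w).1 hw.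
by apply/C3P; exists i3; [rewrite -hx; exact: hI|move=> l; rewrite h3 hx].
Qed.

Lemma I12 : C1 :&: C2 = [set u; v].
Proof.
apply/setP => w; rewrite in_setI in_set2; apply/idP/idP.
  move=> /andP[/C1P h1 /C2P[i h2]].
  case: (eqVneq i q) => [ei|iq].
    by subst; apply/orP; left; apply/eqP; apply: cd_inj => l; rewrite h2 Hu2.
  case: (eqVneq i p) => [ei|ip].
    by subst; apply/orP; right; apply/eqP; apply: cd_inj => l; rewrite h2 Hv2.
  exfalso; have := h1 i ip iq; have := h2 i; rewrite eqxx (yr ip iq); lia.
by case/orP => /eqP ->; rewrite ?u1 ?u2 ?v1 ?v2.
Qed.

Lemma I13 : C1 :&: C3 = [set u; v].
Proof.
apply/setP => w; rewrite in_setI in_set2; apply/idP/idP.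
  move=> /andP[/C1P h1 /C3P[i ai h2]].
  case: (eqVneq i p) => [ei|ip].
    by subst; apply/orP; left; apply/eqP; apply: cd_inj => l; rewrite h2 Hu3.
  case: (eqVneq i q) => [ei|iq].
    by subst; apply/orP; right; apply/eqP; apply: cd_inj => l; rewrite h2 Hv3.
  exfalso; have := h1 i ip iq; have := h2 i; move: ai; rewrite eqxx (zr ip iq); lia.
by case/orP => /eqP ->; rewrite ?u1 ?u3 ?v1 ?v3.
Qed.

Lemma I23 : C2 :&: C3 = [set u; v].
Proof.
apply/setP => w; rewrite in_setI in_set2; apply/idP/idP.
  move=> /andP[/C2P[i h2] /C3P[i' ai h3]].
  case: (eqVneq i q) => [ei|iq].
    by subst; apply/orP; left; apply/eqP; apply: cd_inj => l; rewrite h2 Hu2.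
  case: (eqVneq i p) => [ei|ip].
    by subst; apply/orP; right; apply/eqP; apply: cd_inj => l; rewrite h2 Hv2.
  exfalso; have := h2 i; have := h3 i; rewrite eqxx (yr ip iq) (zr ip iq).
  case: (i == i'); lia.
by case/orP => /eqP ->; rewrite ?u2 ?u3 ?v2 ?v3.
Qed.

Lemma common w : adj u w -> adj v w -> w \in C1 :|: C2 :|: C3.
Proof.
move=> huw hvw.
have [p' [q' [b [pq' b0 hp' hq' hr']]]] := adj_orient huw.
rewrite !in_setU.
have inC1 : (forall l, l != p -> l != q -> cd w l = cd u l) -> w \in C1 by move=> h; apply/C1P.
have Nq : forall x y : 'I_m, x != y -> y != x by move=> x y; rewrite eq_sym.
case: (eqVneq p' p) => [ep|np']; case: (eqVneq q' q) => [eq'|nq']; subst.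
- by rewrite inC1 // => l lp lq; rewrite hr'.
- have q'p := Nq _ _ pq'.
  have hwq := hr' _ qp (Nq _ _ nq').
  have hvq' := Hr q'p nq'.
  have d1 : cd v q' != cd w q' by apply/eqP; lia.
  have d2 : cd v q != cd w q by apply/eqP; lia.
  have := adj_rest hvw nq' d1 d2 pq' pq => hvp.
  have ba : b = a by lia.
  subst b.
  apply/orP; right; apply/C3P; exists q'; first by rewrite (zr q'p nq'); lia.
  move=> l; case: (eqVneq l q') => [->|lq']; first by rewrite (zr q'p nq'); lia.
  case: (eqVneq l p) => [->|lp]; first by rewrite /zz; lia.
  case: (eqVneq l q) => [->|lq]; first by rewrite /zz; lia.
  by rewrite (zr lp lq) -(hr' l lp lq'); lia.
- have hvp' := Hr np' pq'.
  have hwp := hr' _ (Nq _ _ np') pq.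
  have d1 : cd v p' != cd w p' by apply/eqP; lia.
  have d2 : cd v p != cd w p by apply/eqP; lia.
  have := adj_rest hvw np' d1 d2 (Nq _ _ pq') qp => hvq.
  have ba : b = a by lia.
  subst b.
  apply/orP; left; apply/orP; right; apply/C2P; exists p'.
  move=> l; case: (eqVneq l p') => [->|lp']; first by rewrite (yr np' pq'); lia.
  case: (eqVneq l p) => [->|lp]; first by rewrite /yy; lia.
  case: (eqVneq l q) => [->|lq]; first by rewrite /yy; lia.
  by rewrite (yr lp lq) -(hr' l lp' lq); lia.
- case: (eqVneq p' q) => [e1|n1]; case: (eqVneq q' p) => [e2|n2]; subst.
  + by rewrite inC1 // => l lp lq; rewrite hr'.
  + have hvq' := Hr n2 nq'.
    have hwp := hr' _ pq (Nq _ _ n2).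
    exfalso; apply: (adj_three hvw (p := q) (q := q') (r := p)) => //;
    by [apply/eqP; lia | rewrite eq_sym].
  + have hvp' := Hr np' n1.
    have hwq := hr' _ (Nq _ _ n1) qp.
    exfalso; apply: (adj_three hvw (p := p) (q := p') (r := q)) => //;
    by [apply/eqP; lia | rewrite eq_sym].
  + have hvp' := Hr np' n1.
    have hvq' := Hr n2 nq'.
    have hwp := hr' _ (Nq _ _ np') (Nq _ _ n2).
    exfalso; apply: (adj_three hvw (p := p') (q := q') (r := p)) => //;
    by [apply/eqP; lia | rewrite eq_sym].
Qed.

Lemma part1_core : exists C1 C2 C3 : {set SRV m n},
       [/\ largest_type 1 u v C1, largest_type 2 u v C2 & largest_type 3 u v C3] /\
       [/\ C1 :&: C2 = [set u; v], C1 :&: C3 = [set u; v], C2 :&: C3 = [set u; v]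
         & forall w, adj u w -> adj v w -> w \in C1 :|: C2 :|: C3].
Proof.
exists C1, C2, C3; split; first by split; [exact: L1|exact: L2|exact: L3].
split; [exact: I12|exact: I13|exact: I23|exact: common].
Qed.
End Main.

Section Gen.
Variables m n : nat.
Local Notation V := (SRV m n).
Implicit Types u v w : V.

Lemma part1 u v : adj u v -> exists C1 C2 C3 : {set V},
       [/\ largest_type 1 u v C1, largest_type 2 u v C2 & largest_type 3 u v C3] /\
       [/\ C1 :&: C2 = [set u; v], C1 :&: C3 = [set u; v], C2 :&: C3 = [set u; v]
         & forall w, adj u w -> adj v w -> w \in C1 :|: C2 :|: C3].
Proof.
move=> /adj_orient [p [q [a [pq a0 Hp Hq Hr]]]]; exact: part1_core pq a0 Hp Hq Hr.
Qed.

Lemma largest_uniq i u v C C' : largest_type i u v C -> largest_type i u v C' -> C = C'.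
Proof.
move=> [hc [hu [hv hC]]] [hc' [hu' [hv' hC']]].
by apply/eqP; rewrite eqEsubset hC' // hC.
Qed.

Lemma exists_largest i u v : 1 <= i <= 3 -> adj u v -> exists C, largest_type i u v C.
Proof.
move=> hi /part1 [C1 [C2 [C3 [[h1 h2 h3] _]]]].
by case: i hi => [|[|[|[|i]]]] // _; [exists C1|exists C2|exists C3].
Qed.

Lemma largest_inter i i' u v C C' : i != i' -> 1 <= i <= 3 -> 1 <= i' <= 3 -> adj u v ->
  largest_type i u v C -> largest_type i' u v C' -> C :&: C' = [set u; v].
Proof.
move=> ii hi hi' /part1 [C1 [C2 [C3 [[h1 h2 h3] [e12 e13 e23 _]]]]] hC hC'.
case: i ii hi hC => [|[|[|[|i]]]] // ii _ hC;
case: i' ii hi' hC' => [|[|[|[|i']]]] // ii _ hC';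
(try rewrite (largest_uniq hC h1)); (try rewrite (largest_uniq hC h2));
(try rewrite (largest_uniq hC h3)); (try rewrite (largest_uniq hC' h1));
(try rewrite (largest_uniq hC' h2)); (try rewrite (largest_uniq hC' h3));
by rewrite // setIC.
Qed.

Lemma largest_maximal i u v C : largest_type i u v C -> maximal_type i u C.
Proof.
move=> [hc [hu [hv hC]]]; split => //; split => // D hD sub.
by apply/eqP; rewrite eqEsubset sub andbT; apply: hC => //; apply: (subsetP sub).
Qed.

Lemma maximal_largest i u v C C' : maximal_type i u C -> v \in C ->
  largest_type i u v C' -> C = C'.
Proof.
move=> [hc [hu hmax]] hv [hc' [hu' [hv' hC']]].
have sub := hC' C hc hu hv.
by apply/esym/hmax.
Qed.

Lemma common_in u v w : adj u v -> adj u w -> adj v w ->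
  exists i C, [/\ 1 <= i <= 3, largest_type i u v C & w \in C].
Proof.
move=> /part1 [C1 [C2 [C3 [[h1 h2 h3] [_ _ _ hw]]]]] huw hvw.
move: (hw w huw hvw); rewrite !in_setU => /orP[/orP[]|] h.
- by exists 1, C1.
- by exists 2, C2.
- by exists 3, C3.
Qed.
End Gen.

Theorem lemma11 (m n : nat) :
  (* (i) *)
  (forall u v : SRV m n, adj u v ->
     exists C1 C2 C3 : {set SRV m n},
       [/\ largest_type 1 u v C1, largest_type 2 u v C2 & largest_type 3 u v C3] /\
       [/\ C1 :&: C2 = [set u; v], C1 :&: C3 = [set u; v], C2 :&: C3 = [set u; v]
         & forall w, adj u w -> adj v w -> w \in C1 :|: C2 :|: C3])
  /\
  (* (ii) *)
  (forall u : SRV m n,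
     let U := [set w | adj u w] in
     (forall i, 1 <= i <= 3 ->
        [/\ forall C, maximal_type i u C -> C :\ u \subset U,
            forall C, maximal_type i u C -> U != set0 -> C :\ u != set0
          & forall w, w \in U ->
              exists! C, maximal_type i u C /\ w \in C :\ u])
     /\
     (forall v w, v \in U -> w \in U -> adj v w ->
        exists i C, [/\ 1 <= i <= 3, maximal_type i u C, v \in C & w \in C] /\
          forall i' C', 1 <= i' <= 3 -> maximal_type i' u C' ->
            v \in C' -> w \in C' -> i' = i /\ C' = C))
  /\
  (* (iii) no induced K_{1,1,4} *)
  ~ (exists (a b : SRV m n) (c : 'I_4 -> SRV m n),
       [/\ injective c, adj a b,
           forall k, adj a (c k) /\ adj b (c k)
         & forall k l, k != l -> ~~ adj (c k) (c l)]).
Proof.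
split; first by move=> u v; exact: part1.
split.
  move=> u U; split.
    move=> i hi; split.
    - move=> C [[hcl _] [hu _]]; apply/subsetP => w; rewrite !inE => /andP[wu wC].
      by apply: hcl => //; rewrite eq_sym.
    - move=> C hC /set0Pn [w]; rewrite /U inE => huw.
      have [C' hC'] := exists_largest hi huw.
      apply/negP => /eqP e.
      have sub : C \subset C'.
        apply/subsetP => x xC; case: (eqVneq x u) => [->|xu]; first by case: hC' => _ [].
        have : x \in C :\ u by rewrite !inE xu.
        by rewrite e inE.
      case: hC => hc [hu hmax].
      have eC := hmax C' (proj1 hC') sub.
      have : w \in C :\ u by rewrite !inE -eC; case: hC' => _ [_ [-> _]]; rewrite andbT eq_sym adj_neq.
      by rewrite e inE.
    - move=> w; rewrite /U inE => huw.
      have [C' hC'] := exists_largest hi huw.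
      exists C'; split.
        split; first exact: largest_maximal hC'.
        by rewrite !inE eq_sym adj_neq //; case: hC' => _ [_ [->]].
      move=> C [hC /setD1P[_ wC]]; symmetry; exact: maximal_largest hC wC hC'.
  move=> v w; rewrite /U !inE => huv huw hvw.
  have [i [C [hi hC hwC]]] := common_in huv huw hvw.
  exists i, C; split.
    split => //; first exact: largest_maximal hC.
    by case: hC => _ [_ []].
  move=> i' C' hi' hC' hv' hw'.
  have [C'' hC''] := exists_largest hi' huv.
  have e := maximal_largest hC' hv' hC''.
  case: (eqVneq i' i) => [ei|nii].
    by subst i'; split => //; rewrite e; exact: largest_uniq hC'' hC.
  exfalso; have := largest_inter nii hi' hi huv hC'' hC.
  move/setP/(_ w); rewrite in_setI -e hw' hwC in_set2 /=.
  by move/esym => /orP [] /eqP ew; subst w; rewrite adj_irr in huw hvw.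
move=> [a [b [c [cinj hab hc hnc]]]].
have [C1 [C2 [C3 [[h1 h2 h3] [_ _ _ hw]]]]] := part1 hab.
have cl : forall C i, largest_type i a b C -> forall k l, k != l -> c k \in C -> c l \in C -> False.
  move=> C i [[hcl _] _] k l kl hk hl.
  have := hnc k l kl; rewrite hcl //.
  by apply: (contra _ kl) => /eqP/cinj ->.
have mem k : c k \in C1 :|: C2 :|: C3 by have [x y] := hc k; apply: hw.
pose cls x := if x \in C1 then 0 else if x \in C2 then 1 else 2.
have lt3 x : cls x < 3 by rewrite /cls; case: (x \in C1); case: (x \in C2).
pose g k : 'I_3 := inord (cls (c k)).
have ginj : injective g.
  move=> k l e; case: (eqVneq k l) => // kl; exfalso.
  move: e => /(congr1 (@nat_of_ord 3)); rewrite /g !inordK ?lt3 // /cls.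
  have mk := mem k; have ml := mem l; rewrite !in_setU in mk ml.
  case: ifP mk => k1 mk; [|case: ifP mk => k2 mk]; case: ifP ml => l1 ml;
    try case: ifP ml => l2 ml; move=> //= _.
  - exact: (cl _ _ h1 _ _ kl).
  - exact: (cl _ _ h2 _ _ kl).
  - exact: (cl _ _ h3 _ _ kl).
by have := @leq_card _ _ g ginj; rewrite !card_ord.
Qed.
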